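(* Let $n\geq3$ and let $S_n$ act on $V=\mathbb{C}^n$ by its natural permutation representation. The subspace of $(H^{2,1}\oplus H^{2,0})^{S_n}$ consisting of elements supported only on $3$-cycles is two-dimensional if $n=3$ and three-dimensional if $n\geq4$.
   Context: $S_n$ acts by $\sigma e_i=e_{\sigma(i)}$. For $g\in S_n$, let $V^g$ be its fixed space, $(V^g)^\perp$ its orthogonal complement (standard bilinear form), $c_g=\operatorname{codim}V^g$; identify $(V^g)^*$ with functionals on $V$ vanishing on $(V^g)^\perp$ and $((V^g)^* )^\perp$ with functionals vanishing on $V^g$. Set $H^{2,d}_g=S^d(V^g)\otimes\bigwedge^{2-c_g}(V^g)^*\otimes\bigwedge^{c_g}((V^g)^* )^\perp\otimes\mathbb{C}g\subseteq S^d(V)\otimes\bigwedge^2V^*\otimes\mathbb{C}g$ (zero if $2-c_g<0$) and $H^{2,d}=\bigoplus_gH^{2,d}_g$, with $S_n$ acting diagonally ($h\cdot(f\otimes\omega\otimes g)=hf\otimes h\omega\otimes hgh^{-1}$). An element is supported only on 3-cycles if its components $H^{2,\bullet}_g$ vanish for all $g$ that are not 3-cycles. *)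

(* Defs.v *)
From HB Require Import structures.
From mathcomp Require Import all_boot all_order all_algebra all_fingroup.
Set Implicit Arguments. Unset Strict Implicit. Unset Printing Implicit Defensive.
Import GRing.Theory.
Local Open Scope ring_scope.

(* Ambient field: an arbitrary algebraically closed field with conjugation
   (numClosedFieldType), the MathComp abstraction of the complex numbers. *)

Section Defs.
Variables (C : numClosedFieldType) (n : nat).

(* V = C^n, with coordinates w.r.t. e_0..e_{n-1}; V^* likewise (dual basis). *)
Local Notation vec := {ffun 'I_n -> C^o}.

(* standard bilinear form on V; also the pairing V^* x V *)
Definition bil (u v : vec) : C := \sum_i u i * v i.

(* permutation action  sigma e_i = e_{sigma i}:  (sigma v)_j = v_{sigma^-1 j} *)
Definition pact (h : {perm 'I_n}) (v : vec) : vec := [ffun j => v (h^-1 j)%g].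

Definition is_dim (W : lmodType C) (P : W -> Prop) (k : nat) : Prop :=
  exists b : 'I_k -> W,
    (forall i, P (b i)) /\
    (forall c : 'I_k -> C, \sum_i c i *: b i = 0 -> forall i, c i = 0) /\
    (forall w, P w -> exists c : 'I_k -> C, w = \sum_i c i *: b i).

Definition in_span (W : lmodType C) (P : W -> Prop) (w : W) : Prop :=
  exists m (c : 'I_m -> C) (b : 'I_m -> W),
    (forall i, P (b i)) /\ w = \sum_i c i *: b i.

Definition fixsp (g : {perm 'I_n}) (v : vec) : Prop := pact g v = v.
Definition fixperp (g : {perm 'I_n}) (u : vec) : Prop :=
  forall v, fixsp g v -> bil u v = 0.
(* (V^g)^* : functionals vanishing on (V^g)^perp *)
Definition dual_fix (g : {perm 'I_n}) (phi : vec) : Prop :=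
  forall u, fixperp g u -> bil phi u = 0.
(* ((V^g)^* )^perp : functionals vanishing on V^g *)
Definition dual_perp (g : {perm 'I_n}) (phi : vec) : Prop :=
  forall v, fixsp g v -> bil phi v = 0.

Definition codim_is (g : {perm 'I_n}) (c : nat) : Prop :=
  (c <= n)%N /\ is_dim (fixsp g) (n - c).

(* Lambda^2 V^* : alternating forms, coordinates omega(e_i, e_j) *)
Local Notation form2 := {ffun 'I_n * 'I_n -> C^o}.
Definition wedge (phi psi : vec) : form2 :=
  [ffun ij => phi ij.1 * psi ij.2 - phi ij.2 * psi ij.1].

(* S^1(V) (x) Lambda^2 V^* : coordinates T(k,(i,j)) of e_k (x) omega *)
Local Notation tens3 := {ffun 'I_n * ('I_n * 'I_n) -> C^o}.
Definition tens (s : vec) (w : form2) : tens3 :=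
  [ffun kij => s kij.1 * w kij.2].

(* pairs (phi, psi) whose wedges span
   Lambda^{2-c_g}(V^g)^* (x) Lambda^{c_g}((V^g)^* )^perp  inside Lambda^2 V^*
   (no generators, i.e. the zero space, when c_g > 2) *)
Definition wedge_gen (g : {perm 'I_n}) (phi psi : vec) : Prop :=
  exists c, codim_is g c /\
    [\/ c = 0%N /\ dual_fix g phi /\ dual_fix g psi,
        c = 1%N /\ dual_fix g phi /\ dual_perp g psi
      | c = 2%N /\ dual_perp g phi /\ dual_perp g psi].

(* H^{2,0}_g  (S^0(V^g) = C) *)
Definition H20 (g : {perm 'I_n}) (w : form2) : Prop :=
  in_span (fun w' => exists phi psi, wedge_gen g phi psi /\ w' = wedge phi psi) w.

(* H^{2,1}_g  (S^1(V^g) = V^g) *)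
Definition H21 (g : {perm 'I_n}) (T : tens3) : Prop :=
  in_span (fun T' => exists s phi psi,
              fixsp g s /\ wedge_gen g phi psi /\ T' = tens s (wedge phi psi)) T.

(* ambient space  (bigoplus_g S^1(V) (x) L^2V^* (x) Cg) (+) (bigoplus_g L^2V^* (x) Cg) *)
Definition amb : lmodType C :=
  ({ffun {perm 'I_n} -> tens3} * {ffun {perm 'I_n} -> form2})%type.

Definition inH (x : amb) : Prop := forall g, H21 g (x.1 g) /\ H20 g (x.2 g).

(* diagonal action h.(f (x) omega (x) g) = hf (x) h omega (x) h g h^-1,
   so (h.x)_g = h.(x_{h^-1 g h}).  In MathComp, (h * g * h^-1)%g is the
   permutation  i |-> h^-1 (g (h i)),  i.e. the composite h^-1 o g o h. *)
Definition act (h : {perm 'I_n}) (x : amb) : amb :=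
  ([ffun g => [ffun kij : 'I_n * ('I_n * 'I_n) =>
       x.1 (h * g * h^-1)%g ((h^-1)%g kij.1, ((h^-1)%g kij.2.1, (h^-1)%g kij.2.2))]],
   [ffun g => [ffun ij : 'I_n * 'I_n =>
       x.2 (h * g * h^-1)%g ((h^-1)%g ij.1, (h^-1)%g ij.2)]]).

Definition Sn_invariant (x : amb) : Prop := forall h, act h x = x.

Definition is_3cycle (g : {perm 'I_n}) : Prop :=
  exists a b c : 'I_n,
    [/\ a != b, b != c & a != c] /\ [/\ g a = b, g b = c & g c = a] /\
    (forall i, i \notin [:: a; b; c] -> g i = i).

Definition supp3 (x : amb) : Prop :=
  forall g, ~ is_3cycle g -> x.1 g = 0 /\ x.2 g = 0.

End Defs.

(* Main.v *)
Require Import Defs.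
From HB Require Import structures.
From mathcomp Require Import all_boot all_order all_algebra all_fingroup zify ring.
Set Implicit Arguments. Unset Strict Implicit. Unset Printing Implicit Defensive.
Import GRing.Theory.
Local Open Scope ring_scope.

Section S.
Variables (C : numClosedFieldType) (n : nat).
Local Notation vec := {ffun 'I_n -> C^o}.
Local Notation form2 := {ffun 'I_n * 'I_n -> C^o}.
Local Notation tens3 := {ffun 'I_n * ('I_n * 'I_n) -> C^o}.
Local Notation amb := (amb C n).
Implicit Types (g h : {perm 'I_n}).

Definition c3w g (a b c : 'I_n) : bool :=
  [&& [&& a != b, b != c & a != c], [&& g a == b, g b == c & g c == a] &
      [forall i, (i \notin [:: a; b; c]) ==> (g i == i)]].
Definition cyc3 g := [exists a, exists b, exists c, c3w g a b c].

Lemma c3wP g a b c : reflect ([/\ a != b, b != c & a != c] /\ [/\ g a = b, g b = c & g c = a] /\ (forall i, i \notin [:: a; b; c] -> g i = i)) (c3w g a b c).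
Proof.
apply: (iffP and3P) => [[/and3P[ab bc ac] /and3P[/eqP ga /eqP gb /eqP gc] /forallP H]|[[ab bc ac] [[ga gb gc] H]]].
  by split=> //; split=> // i Hi; apply/eqP; exact: (implyP (H i)).
split; first by apply/and3P.
  by apply/and3P; rewrite ga gb gc.
by apply/forallP => i; apply/implyP => Hi; apply/eqP/H.
Qed.

Lemma cyc3P g : reflect (is_3cycle g) (cyc3 g).
Proof.
apply: (iffP existsP) => [[a /existsP[b /existsP[c /c3wP H]]]|[a [b [c H]]]].
  by exists a, b, c.
by exists a; apply/existsP; exists b; apply/existsP; exists c; apply/c3wP.
Qed.

Lemma pconj h g i : (h * g * h^-1)%g ((h^-1)%g i) = (h^-1)%g (g i).
Proof. by rewrite !permM permKV. Qed.

Lemma c3w_conj h g a b c : c3w g a b c ->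
  c3w (h * g * h^-1)%g ((h^-1)%g a) ((h^-1)%g b) ((h^-1)%g c).
Proof.
move/c3wP => [[ab bc ac] [[ga gb gc] gi]]; apply/c3wP; split.
  by rewrite !(inj_eq perm_inj).
split; first by split; rewrite pconj ?ga ?gb ?gc.
move=> i Hi; rewrite -(permK h i) pconj gi //.
apply: contra Hi; rewrite !inE => /or3P[]/eqP<-; rewrite permK eqxx ?orbT //.
Qed.

Lemma conj_back h g : (h^-1 * (h * g * h^-1) * (h^-1)^-1)%g = g.
Proof. by rewrite invgK !mulgA mulVg mul1g -mulgA mulVg mulg1. Qed.

Lemma cyc3_conj h g : cyc3 (h * g * h^-1)%g = cyc3 g.
Proof.
apply/idP/idP => /existsP[a /existsP[b /existsP[c H]]].
  have := c3w_conj (h^-1)%g H; rewrite conj_back => H'.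
  by apply/existsP; exists ((h^-1)^-1 a)%g; apply/existsP; exists ((h^-1)^-1 b)%g; apply/existsP; exists ((h^-1)^-1 c)%g.
have H' := c3w_conj h H.
by apply/existsP; exists ((h^-1) a)%g; apply/existsP; exists ((h^-1) b)%g; apply/existsP; exists ((h^-1) c)%g.
Qed.

Lemma abc_cases g a b c j : c3w g a b c ->
  [\/ j = a, j = b, j = c | [/\ j != a, j != b, j != c & g j = j]].
Proof.
move/c3wP => [_ [_ gi]].
have [->|ja] := eqVneq j a; first by constructor 1.
have [->|jb] := eqVneq j b; first by constructor 2.
have [->|jc] := eqVneq j c; first by constructor 3.
constructor 4; split => //; apply: gi; rewrite !inE; apply/negP => /or3P[]/eqP; by [move/eqP: ja|move/eqP: jb|move/eqP: jc].
Qed.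

Definition e (x : 'I_n) : vec := [ffun j => (j == x)%:R].
Definition om g (i j : 'I_n) : C :=
  if g i != i then (j == g i)%:R - (i == g j)%:R else 0.

Ltac neqs := repeat match goal with
  | H : is_true (?x != ?y) |- context [?x == ?y] => rewrite (negbTE H)
  | H : is_true (?x != ?y) |- context [?y == ?x] => rewrite (eq_sym y x) (negbTE H)
  end.

Lemma om_wedge g a b c i j : c3w g a b c ->
  om g i j = wedge (e a - e b) (e b - e c) (i, j).
Proof.
move=> H; have := H; move/c3wP => [[ab bc ac] [[ga gb gc] _]].
rewrite /om !ffunE /=.
case: (abc_cases j H) => [->|->|->|[ja jb jc gj]];
case: (abc_cases i H) => [->|->|->|[ia ib ic gi]];
rewrite ?ga ?gb ?gc ?gi ?gj ?eqxx; neqs; rewrite /=; try ring.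
Qed.


Lemma notin3 (a b c j : 'I_n) : j != a -> j != b -> j != c -> j \notin [:: a; b; c].
Proof. by move=> ja jb jc; rewrite !inE negb_or ja negb_or jb jc. Qed.

Lemma fix_iff g (v : vec) : fixsp g v <-> forall k, v (g k) = v k.
Proof.
rewrite /fixsp /pact; split => [H k | H].
  by rewrite -{1}H ffunE permK.
by apply/ffunP => j; rewrite ffunE -{2}(permKV g j) H.
Qed.

Lemma sumZE (aT : finType) m (cc : 'I_m -> C) (bs : 'I_m -> {ffun aT -> C^o}) x :
  (\sum_i cc i *: bs i) x = \sum_i cc i * bs i x.
Proof. by rewrite sum_ffunE; apply: eq_bigr => i _; rewrite ffunE. Qed.

Lemma sum_delta m (cc : 'I_m -> C) i : \sum_j cc j * (i == j)%:R = cc i.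
Proof.
rewrite (bigD1 i) //= eqxx mulr1 big1 ?addr0 // => j ji.
by rewrite eq_sym (negbTE ji) mulr0.
Qed.

Lemma bil_e (phi : vec) k : bil phi (e k) = phi k.
Proof.
rewrite /bil (bigD1 k) //= ffunE eqxx mulr1 big1 ?addr0 // => i ik.
by rewrite ffunE (negbTE ik) mulr0.
Qed.

Lemma bil_e' k (v : vec) : bil (e k) v = v k.
Proof.
rewrite /bil (bigD1 k) //= ffunE eqxx mul1r big1 ?addr0 // => i ik.
by rewrite ffunE (negbTE ik) mul0r.
Qed.

Lemma bilD (phi u v : vec) : bil phi (u + v) = bil phi u + bil phi v.
Proof. by rewrite /bil -big_split; apply: eq_bigr => i _; rewrite ffunE mulrDr. Qed.

Lemma bilB1 (u w v : vec) : bil (u - w) v = bil u v - bil w v.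
Proof. by rewrite /bil -sumrB; apply: eq_bigr => i _; rewrite !ffunE mulrBl. Qed.

Lemma fix_e g k : g k = k -> fixsp g (e k : vec).
Proof. by move=> gk; apply/fix_iff => j; rewrite !ffunE -{1}gk (inj_eq perm_inj). Qed.

Lemma fix_sv g (t : bool) : fixsp g ([ffun j => ((g j != j) == t)%:R] : vec).
Proof. by apply/fix_iff => j; rewrite !ffunE (inj_eq perm_inj). Qed.

Lemma sv_abc g a b c : c3w g a b c ->
  [ffun j => ((g j != j) == true)%:R] = e a + e b + e c :> vec.
Proof.
move=> H; have := H; move/c3wP => [[ab bc ac] [[ga gb gc] _]].
apply/ffunP => j; rewrite !ffunE.
case: (abc_cases j H) => [->|->|->|[ja jb jc gj]];
rewrite ?ga ?gb ?gc ?gj ?eqxx; neqs; rewrite /=; ring.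
Qed.

Lemma fix_abc g a b c (v : vec) : c3w g a b c -> fixsp g v -> v b = v a /\ v c = v a.
Proof.
move/c3wP => [_ [[ga gb gc] _]] /fix_iff Hv.
by rewrite -gb Hv -ga Hv.
Qed.

Lemma card_S g a b c : c3w g a b c -> #|~: [set b; c]| = (n - 2)%N /\ (2 <= n)%N.
Proof.
move/c3wP => [[ab bc ac] _].
by have := cardsC [set b; c]; rewrite cards2 bc card_ord /= => E; split; lia.
Qed.

Lemma fixdim g a b c : c3w g a b c -> is_dim (@fixsp C n g) (n - 2).
Proof.
move=> H; have := H; move/c3wP => [[ab bc ac] [[ga gb gc] gi]].
set S := ~: [set b; c].
have aS : a \in S by rewrite !inE negb_or ab ac.
case: (card_S H) => E _; rewrite -E.
pose sv := [ffun j => ((g j != j) == true)%:R] : vec.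
pose bs := fun i : 'I_#|S| => if enum_val i == a then sv else e (enum_val i).
have bev : forall i j, bs j (enum_val i) = (i == j)%:R.
  move=> i j; rewrite /bs -(inj_eq enum_val_inj).
  have := enum_valP i; rewrite !inE negb_or => /andP[ib ic].
  case: ifP => [/eqP -> | jna]; last by rewrite ffunE.
  rewrite ffunE.
  case: (abc_cases (enum_val i) H) => [->|ib'|ic'|[ia _ _ gi']].
  - by rewrite ga (eq_sym b a) ab !eqxx. 
  - by rewrite ib' eqxx in ib.
  - by rewrite ic' eqxx in ic.
  - by rewrite gi' eqxx (negbTE ia).
have bfix : forall j, fixsp g (bs j).
  move=> j; rewrite /bs; case: ifP => ja; first exact: fix_sv.
  apply: fix_e; apply: gi; have := enum_valP j; rewrite !inE !negb_or ja => /andP[-> ->].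
  by [].
exists bs; split => //; split.
  move=> cc Hs i; have := congr1 (fun f : vec => f (enum_val i)) Hs.
  rewrite sumZE ffunE (eq_bigr (fun j => cc j * (i == j)%:R)) ?sum_delta //.
  by move=> j _; rewrite bev.
move=> v Hv; exists (fun i => v (enum_val i)); apply/ffunP => k; rewrite sumZE.
have key : forall k, k \in S -> v k = \sum_i v (enum_val i) * bs i k.
  move=> k' kS; rewrite -(enum_rankK_in aS kS) (eq_bigr (fun j => v (enum_val j) * ((enum_rank_in aS k') == j)%:R)) ?sum_delta //.
  by move=> j _; rewrite bev.
case: (boolP (k \in S)) => [kS|]; first exact: key.
rewrite in_setC negbK in_set2 => /orP[]/eqP->; case: (fix_abc H Hv) => vb vc; rewrite ?vb ?vc;
rewrite (key a aS); apply: eq_bigr => i _; case: (fix_abc H (bfix i)) => vb' vc'; by rewrite ?vb' ?vc'.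
Qed.

Lemma dim_le g a b c k : c3w g a b c -> is_dim (@fixsp C n g) k -> (k <= n - 2)%N.
Proof.
move=> H [bs [Hf [Hind _]]].
set S := ~: [set b; c].
have := H; move/c3wP => [[ab bc ac] _].
have aS : a \in S by rewrite !inE negb_or ab ac.
case: (card_S H) => E _.
pose M := \matrix_(i < k, j < #|S|) bs i (enum_val j).
have rf : row_free M.
  apply: inj_row_free => v Hv.
  have key : forall j, j \in S -> \sum_i v 0 i * bs i j = 0.
    move=> j' jS; have E' := congr1 (fun A : 'M[C^o]_(1, #|S|) => A 0 (enum_rank_in aS j')) Hv.
    rewrite /= !mxE in E'; apply: etrans E'; apply: eq_bigr => i _.
    by rewrite mxE (enum_rankK_in aS jS).
  have Hs : \sum_i v 0 i *: bs i = 0.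
    apply/ffunP => j; rewrite sumZE ffunE.
    case: (boolP (j \in S)) => [jS|]; first exact: key.
    rewrite in_setC negbK in_set2 => /orP[]/eqP->; apply: etrans (key a aS);
    apply: eq_bigr => i _; case: (fix_abc H (Hf i)) => vb vc; by rewrite ?vb ?vc.
  by apply/rowP => i; rewrite mxE; exact: (Hind (fun i => v 0 i) Hs i).
by have := rank_leq_col M; rewrite (eqP rf) E.
Qed.

Lemma wg_perp g a b c (phi psi : vec) : c3w g a b c -> wedge_gen g phi psi ->
  dual_perp g phi /\ dual_perp g psi.
Proof.
move=> H [k [[kn Hk] Hc]]; have := dim_le H Hk; case: (card_S H) => _ n2.
by case: Hc => [[k0 _]|[k1 _]|[_ [p1 p2]]] //; subst k; lia.
Qed.

Lemma dual_perp_abc g a b c (phi : vec) : c3w g a b c -> dual_perp g phi ->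
  (forall k, k != a -> k != b -> k != c -> phi k = 0) /\ phi c = - phi a - phi b.
Proof.
move=> H Hp; have := H; move/c3wP => [_ [_ gi]]; split.
  move=> k ka kb kc; rewrite -bil_e; apply: Hp; apply: fix_e; apply: gi.
  exact: notin3.
have : bil phi (e a + e b + e c) = 0 by apply: Hp; rewrite -(sv_abc H); exact: fix_sv.
rewrite !bilD !bil_e => E.
transitivity ((phi a + phi b + phi c) - phi a - phi b); first ring.
by rewrite E; ring.
Qed.

Lemma wedge_Q g a b c (phi psi : vec) : c3w g a b c -> dual_perp g phi -> dual_perp g psi ->
  forall i j, wedge phi psi (i, j) = wedge phi psi (a, b) * om g i j.
Proof.
move=> H /(dual_perp_abc H) [phi0 phic] /(dual_perp_abc H) [psi0 psic] i j.
have := H; move/c3wP => [[ab bc ac] [[ga gb gc] _]].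
rewrite /om !ffunE /=.
case: (abc_cases j H) => [->|->|->|[ja jb jc gj]];
case: (abc_cases i H) => [->|->|->|[ia ib ic gi]];
rewrite ?ga ?gb ?gc ?gi ?gj ?eqxx; neqs; rewrite /= ?phic ?psic;
try rewrite (phi0 i ia ib ic); try rewrite (psi0 i ia ib ic);
try rewrite (phi0 j ja jb jc); try rewrite (psi0 j ja jb jc); ring.
Qed.


Lemma tensE (s : vec) (w : form2) k i j : tens s w (k, (i, j)) = s k * w (i, j).
Proof. by rewrite ffunE. Qed.

Lemma H20_Q g a b c (w : form2) : c3w g a b c -> H20 g w ->
  forall i j, w (i, j) = w (a, b) * om g i j.
Proof.
move=> H [m [cc [bs [Hb ->]]]] i j; rewrite !sumZE mulr_suml; apply: eq_bigr => l _.
have [phi [psi [Hw ->]]] := Hb l; case: (wg_perp H Hw) => p1 p2.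
by rewrite (wedge_Q H p1 p2 i j) mulrA.
Qed.

Lemma H21_Q g a b c (T : tens3) : c3w g a b c -> H21 g T ->
  (forall k i j, T (k, (i, j)) = T (k, (a, b)) * om g i j) /\
  (forall k, T (g k, (a, b)) = T (k, (a, b))).
Proof.
move=> H [m [cc [bs [Hb ->]]]]; split => [k i j|k]; rewrite !sumZE; [rewrite mulr_suml|];
apply: eq_bigr => l _; have [s [phi [psi [Hs [Hw ->]]]]] := Hb l;
case: (wg_perp H Hw) => p1 p2; rewrite !tensE.
  by rewrite (wedge_Q H p1 p2 i j) !mulrA.
by rewrite (proj1 (fix_iff g s) Hs).
Qed.

Lemma om_conj h g i j : om (h * g * h^-1)%g ((h^-1)%g i) ((h^-1)%g j) = om g i j.
Proof. by rewrite /om !pconj !(inj_eq perm_inj). Qed.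

Lemma inv1 (x : amb) h g k i j : Sn_invariant x ->
  x.1 g (k, (i, j)) = x.1 (h * g * h^-1)%g ((h^-1)%g k, ((h^-1)%g i, (h^-1)%g j)).
Proof. by move=> Hx; rewrite -{1}(Hx h) /act /= !ffunE. Qed.

Lemma inv2 (x : amb) h g i j : Sn_invariant x ->
  x.2 g (i, j) = x.2 (h * g * h^-1)%g ((h^-1)%g i, (h^-1)%g j).
Proof. by move=> Hx; rewrite -{1}(Hx h) /act /= !ffunE. Qed.

Lemma transport (a0 b0 c0 a b c : 'I_n) : a0 != b0 -> b0 != c0 -> a0 != c0 ->
  a != b -> b != c -> a != c ->
  exists h : {perm 'I_n}, [/\ h a0 = a, h b0 = b & h c0 = c].
Proof.
move=> ab0 bc0 ac0 ab bc ac.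
pose p1 := tperm a0 a; pose p2 := tperm (p1 b0) b; pose p3 := tperm (p2 (p1 c0)) c.
have p1a : p1 a0 = a by rewrite tpermL.
have p2a : p2 a = a.
  rewrite /p2 tpermD //; last by rewrite eq_sym.
  by rewrite -p1a (inj_eq perm_inj) eq_sym.
have p3a : p3 a = a.
  rewrite /p3 tpermD //; last by rewrite eq_sym.
  by rewrite -p2a -p1a !(inj_eq perm_inj) eq_sym.
have hb2 : p2 (p1 b0) = b by rewrite tpermL.
have p3b : p3 b = b.
  rewrite /p3 tpermD //; last by rewrite eq_sym.
  by rewrite -hb2 !(inj_eq perm_inj) eq_sym.
exists (p1 * p2 * p3)%g; rewrite !permM; split.
- by rewrite p1a p2a p3a.
- by rewrite hb2 p3b.
- by rewrite tpermL.
Qed.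

Lemma conj_to g0 g a0 b0 c0 a b c h : c3w g0 a0 b0 c0 -> c3w g a b c ->
  h a0 = a -> h b0 = b -> h c0 = c -> (h * g * h^-1)%g = g0.
Proof.
move=> H0 H ha hb hc; have := H0; move/c3wP => [_ [[ga0 gb0 gc0] _]].
have := H; move/c3wP => [_ [[ga gb gc] gi]].
apply/permP => i; rewrite !permM.
case: (abc_cases i H0) => [->|->|->|[ia ib ic gi0]].
- by rewrite ha ga -hb permK ga0.
- by rewrite hb gb -hc permK gb0.
- by rewrite hc gc -ha permK gc0.
rewrite gi ?permK ?gi0 //; apply: notin3; by rewrite -?ha -?hb -?hc (inj_eq perm_inj).
Qed.

Definition omf g : form2 := [ffun ij => om g ij.1 ij.2].
Definition B0 : amb := (0, [ffun g => if cyc3 g then omf g else 0]).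
Definition Bs (t : bool) : amb :=
  ([ffun g => if cyc3 g then [ffun kij : 'I_n * ('I_n * 'I_n) =>
       ((g kij.1 != kij.1) == t)%:R * om g kij.2.1 kij.2.2] else 0], 0).

Lemma zero_app (aT : finType) (rT : nmodType) (x : aT) : (0 : {ffun aT -> rT}) x = 0.
Proof. by rewrite ffunE. Qed.

Lemma span0 (W : lmodType C) (P : W -> Prop) : in_span P 0.
Proof. by exists 0%N, (fun _ => 0), (fun _ => 0); split; [case | rewrite big_ord0]. Qed.

Lemma wg_abc g a b c : c3w g a b c -> wedge_gen g (e a - e b) (e b - e c).
Proof.
move=> H; exists 2%N; split.
  by split; [case: (card_S H) | exact: fixdim H].
constructor 3; split => //; split => v Hv; rewrite bilB1 !bil_e';
by case: (fix_abc H Hv) => vb vc; rewrite ?vb ?vc subrr.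
Qed.

Lemma c3wE g : cyc3 g -> exists a b c, c3w g a b c.
Proof. by move/existsP => [a /existsP[b /existsP[c H]]]; exists a, b, c. Qed.

Lemma B0_P : inH B0 /\ Sn_invariant B0 /\ supp3 B0.
Proof.
split; [|split].
- move=> g; rewrite /B0 /= zero_app ffunE; split; first exact: span0.
  case: ifP => cg; last exact: span0.
  have [a [b [c H]]] := c3wE cg.
  exists 1%N, (fun _ => 1), (fun _ => wedge (e a - e b) (e b - e c)); split.
    by move=> _; exists (e a - e b), (e b - e c); split => //; exact: wg_abc.
  rewrite big_ord1 scale1r; apply/ffunP => -[i j]; rewrite ffunE /=; exact: om_wedge H.
- move=> h; rewrite /act /B0 /=; congr pair.
    by apply/ffunP => g; apply/ffunP => kij; rewrite !ffunE ?zero_app.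
  apply/ffunP => g; apply/ffunP => -[i j]; rewrite !ffunE /= cyc3_conj.
  by case: ifP => _; rewrite !ffunE /= ?om_conj.
- move=> g ncg; have cg : cyc3 g = false by apply: negbTE; apply/negP => /cyc3P.
  by rewrite /= !ffunE cg.
Qed.

Lemma Bs_P t : inH (Bs t) /\ Sn_invariant (Bs t) /\ supp3 (Bs t).
Proof.
split; [|split].
- move=> g; rewrite /Bs /= zero_app ffunE; split; last exact: span0.
  case: ifP => cg; last exact: span0.
  have [a [b [c H]]] := c3wE cg.
  pose s : vec := [ffun k => ((g k != k) == t)%:R].
  exists 1%N, (fun _ => 1), (fun _ => tens s (wedge (e a - e b) (e b - e c))); split.
    move=> _; exists s, (e a - e b), (e b - e c); split; first exact: fix_sv.
    by split => //; exact: wg_abc.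
  rewrite big_ord1 scale1r; apply/ffunP => -[k [i j]]; rewrite tensE ffunE /= (om_wedge i j H).
  by congr (_ * _); rewrite ffunE.
- move=> h; rewrite /act /Bs /=; congr pair.
    apply/ffunP => g; apply/ffunP => -[k [i j]]; rewrite !ffunE /= cyc3_conj.
    by case: ifP => _; rewrite !ffunE /= ?om_conj ?pconj ?(inj_eq perm_inj).
  by apply/ffunP => g; apply/ffunP => kij; rewrite !ffunE ?zero_app.
- move=> g ncg; have cg : cyc3 g = false by apply: negbTE; apply/negP => /cyc3P.
  by rewrite /= !ffunE cg.
Qed.


Section Str.
Variables (x : amb) (Hh : inH x) (Hi : Sn_invariant x).
Variables (g0 : {perm 'I_n}) (a0 b0 c0 : 'I_n) (H0 : c3w g0 a0 b0 c0).

Lemma setup g : cyc3 g -> exists h, (h * g * h^-1)%g = g0.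
Proof.
move=> cg; have [a [b [c H]]] := c3wE cg.
have := H0; move/c3wP => [[ab0 bc0 ac0] _]; have := H; move/c3wP => [[ab bc ac] _].
have [h [ha hb hc]] := transport ab0 bc0 ac0 ab bc ac.
by exists h; exact: conj_to H0 H ha hb hc.
Qed.

Lemma strB g i j : cyc3 g -> x.2 g (i, j) = x.2 g0 (a0, b0) * om g i j.
Proof.
move=> /setup [h Ec].
rewrite (inv2 h g i j Hi) Ec (H20_Q H0 (proj2 (Hh g0))).
by congr (_ * _); rewrite -Ec om_conj.
Qed.

Lemma strC g k i j : cyc3 g -> g k != k ->
  x.1 g (k, (i, j)) = x.1 g0 (a0, (a0, b0)) * om g i j.
Proof.
move=> /setup [h Ec] gk.
have := H0; move/c3wP => [_ [[ga0 gb0 gc0] _]].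
have [Q1 Q2] := H21_Q H0 (proj1 (Hh g0)).
have mv : g0 ((h^-1)%g k) != (h^-1)%g k by rewrite -Ec pconj (inj_eq perm_inj).
rewrite (inv1 h g k i j Hi) Ec Q1.
congr (_ * _); last by rewrite -Ec om_conj.
case: (abc_cases ((h^-1)%g k) H0) mv => [->|->|->|[_ _ _ gk']] // mv.
- by rewrite -{1}ga0 Q2.
- by rewrite -{1}gb0 Q2 -{1}ga0 Q2.
- by rewrite gk' eqxx in mv.
Qed.

Lemma strD g k i j d0 : d0 \notin [:: a0; b0; c0] -> cyc3 g -> g k = k ->
  x.1 g (k, (i, j)) = x.1 g0 (d0, (a0, b0)) * om g i j.
Proof.
move=> Hd /setup [h Ec] gk.
have := H0; move/c3wP => [[ab0 bc0 ac0] [[ga0 gb0 gc0] _]].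
have [Q1 Q2] := H21_Q H0 (proj1 (Hh g0)).
set k' := (h^-1)%g k.
have fk : g0 k' = k' by rewrite /k' -Ec pconj gk.
rewrite (inv1 h g k i j Hi) Ec Q1.
congr (_ * _); last by rewrite -Ec om_conj.
move: Hd; rewrite !inE !negb_or => /and3P[da db dc].
have ka : k' != a0 by apply/eqP => E; move: fk; rewrite E ga0 => /eqP; rewrite eq_sym (negbTE ab0).
have kb : k' != b0 by apply/eqP => E; move: fk; rewrite E gb0 => /eqP; rewrite eq_sym (negbTE bc0).
have kc : k' != c0 by apply/eqP => E; move: fk; rewrite E gc0 => /eqP; rewrite (negbTE ac0).
pose h2 := tperm k' d0.
have h2a : h2 a0 = a0 by rewrite tpermD // eq_sym.
have h2b : h2 b0 = b0 by rewrite tpermD // eq_sym.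
have h2c : h2 c0 = c0 by rewrite tpermD // eq_sym.
have E2 := conj_to H0 H0 h2a h2b h2c.
by rewrite (inv1 h2 g0 k' a0 b0 Hi) E2 tpermV tpermL h2a h2b.
Qed.

End Str.

Lemma scE (a b : C) : a *: (b : C^o) = a * b.
Proof. by []. Qed.

Lemma om_ab g a b c : c3w g a b c -> om g a b = 1.
Proof.
move/c3wP => [[ab bc ac] [[ga gb gc] _]].
by rewrite /om ga (eq_sym b a) ab gb eqxx (negbTE ac) subr0.
Qed.

Lemma cyc3_of g a b c : c3w g a b c -> cyc3 g.
Proof. by move=> H; apply/existsP; exists a; apply/existsP; exists b; apply/existsP; exists c. Qed.

Lemma n3_moved g a b c k : n = 3%N -> c3w g a b c -> g k != k.
Proof.
move=> En H; have := H; move/c3wP => [[ab bc ac] [[ga gb gc] _]].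
case: (abc_cases k H) => [->|->|->|[ka kb kc _]].
- by rewrite ga eq_sym.
- by rewrite gb eq_sym.
- by rewrite gc.
move: ka kb kc ab bc ac; rewrite -!(inj_eq (@ord_inj n)).
move: (ltn_ord a) (ltn_ord b) (ltn_ord c) (ltn_ord k); intros; lia.
Qed.

End S.

Local Close Scope ring_scope.
Theorem lemma4p5 (C : numClosedFieldType) (n : nat) (hn : (3 <= n)%N) :
  is_dim (fun x : amb C n => inH x /\ Sn_invariant x /\ supp3 x)
         (if n == 3 then 2 else 3).
Proof.
Local Open Scope ring_scope.
have h0 : (0 < n)%N by lia.
have h1 : (1 < n)%N by lia.
have h2 : (2 < n)%N by lia.
pose a0 : 'I_n := Ordinal h0. pose b0 : 'I_n := Ordinal h1. pose c0 : 'I_n := Ordinal h2.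
have ab0 : a0 != b0 by [].
have bc0 : b0 != c0 by [].
have ac0 : a0 != c0 by [].
have ba0 : b0 != a0 by [].
have ca0 : c0 != a0 by [].
pose g0 := (tperm b0 c0 * tperm a0 b0)%g.
have H0 : c3w g0 a0 b0 c0.
  apply/c3wP; split => //; split; first split.
  - by rewrite permM (@tpermD _ b0 c0 a0) // tpermL.
  - by rewrite permM tpermL (@tpermD _ a0 b0 c0).
  - by rewrite permM tpermR tpermR.
  move=> i; rewrite !inE !negb_or => /and3P[ia ib ic].
  have ai : a0 != i by rewrite eq_sym.
  have bi : b0 != i by rewrite eq_sym.
  have ci : c0 != i by rewrite eq_sym.
  by rewrite permM !tpermD.
have cg0 := cyc3_of H0.
have ga0 : g0 a0 = b0 by move/c3wP: H0 => [_ [[]]].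
have oab := om_ab C H0.
case: (eqVneq n 3%N) => [En|Nn].
  pose bb := fun i : 'I_2 => if val i == 0%N then B0 C n else Bs C n true.
  exists bb; split; [|split].
  - move=> i; rewrite /bb; case: ifP => _; [exact: B0_P | exact: Bs_P].
  - move=> cc Hs.
    have E1 := congr1 (fun y : amb C n => y.2 g0 (a0, b0)) Hs.
    have E2 := congr1 (fun y : amb C n => y.1 g0 (a0, (a0, b0))) Hs.
    rewrite !big_ord_recl big_ord0 /= !ffunE /= cg0 in E1 E2.
    rewrite !ffunE /= oab ga0 (eq_sym b0 a0) ba0 /= in E1 E2.
    rewrite ?scaler0 ?mulr1 ?mul1r ?mulr0 ?addr0 ?add0r in E1 E2.
    move/eqP: E1; rewrite scaler_eq0 oner_eq0 orbF => /eqP e1.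
    move/eqP: E2; rewrite scaler_eq0 oner_eq0 orbF => /eqP e2.
    move=> i; case: i => [[|[|//]]] Hi.
      by rewrite (_ : Ordinal Hi = ord0) //; apply: ord_inj.
    by rewrite (_ : Ordinal Hi = lift ord0 ord0) //; apply: ord_inj.
  - move=> x [Hh [Hi Hs]].
    exists (fun i : 'I_2 => if val i == 0%N then x.2 g0 (a0, b0) else x.1 g0 (a0, (a0, b0))).
    rewrite !big_ord_recl big_ord0 /=.
    have sB := strB Hh Hi H0. have sC := strC Hh Hi H0.
    case: x Hh Hi Hs sB sC => x1 x2 Hh Hi Hs sB sC /=.
    congr pair.
    + apply/ffunP => g; apply/ffunP => -[k [i j]]; rewrite !ffunE /=.
      case cg : (cyc3 g); last first.
        have nc : ~ is_3cycle g by move/cyc3P; rewrite cg.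
        by case: (Hs g nc) => /= -> _; rewrite !ffunE ?scaler0 ?addr0.
      have [a [b [c H]]] := c3wE cg.
      rewrite !ffunE /= (sC g k i j cg (n3_moved k En H)) (n3_moved k En H).
      by rewrite /= scaler0 add0r addr0 mul1r.
    + apply/ffunP => g; apply/ffunP => -[i j]; rewrite !ffunE /=.
      case cg : (cyc3 g); last first.
        have nc : ~ is_3cycle g by move/cyc3P; rewrite cg.
        by case: (Hs g nc) => /= _ ->; rewrite !ffunE ?scaler0 ?addr0.
      rewrite !ffunE /= (sB g i j cg).
      by rewrite /= scaler0 !addr0.
have h3 : (3 < n)%N by lia.
pose d0 : 'I_n := Ordinal h3.
have Hd : d0 \notin [:: a0; b0; c0] by [].
have gd : g0 d0 = d0 by move/c3wP: H0 => [_ [_ gi]]; exact: gi.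
pose bb := fun i : 'I_3 => if val i == 0%N then B0 C n
  else if val i == 1%N then Bs C n true else Bs C n false.
exists bb; split; [|split].
- move=> i; rewrite /bb; case: ifP => _; [exact: B0_P|case: ifP => _; exact: Bs_P].
- move=> cc Hs.
  have E1 := congr1 (fun y : amb C n => y.2 g0 (a0, b0)) Hs.
  have E2 := congr1 (fun y : amb C n => y.1 g0 (a0, (a0, b0))) Hs.
  have E3 := congr1 (fun y : amb C n => y.1 g0 (d0, (a0, b0))) Hs.
  rewrite !big_ord_recl big_ord0 /= !ffunE /= cg0 in E1 E2 E3.
  rewrite !ffunE /= oab ga0 gd (eq_sym b0 a0) ba0 /= in E1 E2 E3.
  rewrite ?scaler0 ?mulr1 ?mul1r ?mulr0 ?mul0r ?addr0 ?add0r in E1 E2 E3.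
  rewrite ?scE ?mulr1 ?mul1r ?mulr0 ?mul0r ?addr0 ?add0r in E1 E2 E3.
  move=> i; case: i => [[|[|[|//]]]] Hi.
  + by rewrite (_ : Ordinal Hi = ord0) //; apply: ord_inj.
  + by rewrite (_ : Ordinal Hi = lift ord0 ord0) //; apply: ord_inj.
  + by rewrite (_ : Ordinal Hi = lift ord0 (lift ord0 ord0)) //; apply: ord_inj.
- move=> x [Hh [Hi Hs]].
  exists (fun i : 'I_3 => if val i == 0%N then x.2 g0 (a0, b0) else
     if val i == 1%N then x.1 g0 (a0, (a0, b0)) else x.1 g0 (d0, (a0, b0))).
  rewrite !big_ord_recl big_ord0 /=.
  have sB := strB Hh Hi H0. have sC := strC Hh Hi H0. have sD := strD Hh Hi H0.
  case: x Hh Hi Hs sB sC sD => x1 x2 Hh Hi Hs sB sC sD /=.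
  congr pair.
  + apply/ffunP => g; apply/ffunP => -[k [i j]]; rewrite !ffunE /=.
    case cg : (cyc3 g); last first.
      have nc : ~ is_3cycle g by move/cyc3P; rewrite cg.
      by case: (Hs g nc) => /= -> _; rewrite !ffunE ?scaler0 ?addr0.
    rewrite !ffunE /=.
    have [gk|gk] := eqVneq (g k) k.
      rewrite (sD g k i j d0 Hd cg gk) /=.
      by rewrite /= scaler0 add0r !scE; ring.
    rewrite (sC g k i j cg gk) /=.
    by rewrite /= scaler0 add0r !scE; ring.
  + apply/ffunP => g; apply/ffunP => -[i j]; rewrite !ffunE /=.
    case cg : (cyc3 g); last first.
      have nc : ~ is_3cycle g by move/cyc3P; rewrite cg.
      by case: (Hs g nc) => /= _ ->; rewrite !ffunE ?scaler0 ?addr0.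
    rewrite !ffunE /= (sB g i j cg).
    by rewrite /= !scaler0 !addr0.
Qed.
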